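(* Let $G$ be a crown-free linear $3$-graph on $n$ vertices, and let $s$ be the number of vertices of $G$ of degree at least $6$. Then the number of edges of $G$ satisfies $$|E(G)| \leq \frac{3(n-s)}{2}.$$
   Context: A linear $3$-graph $G=(V,E)$ consists of a finite vertex set $V$ and a collection $E$ of $3$-element subsets of $V$ (edges) such that any two distinct edges share at most one vertex. The degree $d(v)$ of a vertex $v$ is the number of edges containing $v$. The crown $C_{13}$ is the linear $3$-graph on $9$ vertices $\{a,b,c,d,e,f,g,h,i\}$ with edges $\{a,b,c\},\{a,d,e\},\{b,f,g\},\{c,h,i\}$. A linear $3$-graph is crown-free if it contains no copy of $C_{13}$, i.e. no four of its edges together with an injective assignment of the nine vertices form the crown. *)

(* Defs.v *)
From mathcomp Require Import all_boot.
Set Implicit Arguments. Unset Strict Implicit. Unset Printing Implicit Defensive.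

Definition is_linear_3graph (V : finType) (E : {set {set V}}) : Prop :=
  (forall e, e \in E -> #|e| = 3) /\
  (forall e1 e2, e1 \in E -> e2 \in E -> e1 != e2 -> #|e1 :&: e2| <= 1).

Definition degree (V : finType) (E : {set {set V}}) (v : V) : nat :=
  #|[set e in E | v \in e]|.

Definition has_crown (V : finType) (E : {set {set V}}) : Prop :=
  exists a b c d e f g h i : V,
    uniq [:: a; b; c; d; e; f; g; h; i] /\
    [set a; b; c] \in E /\ [set a; d; e] \in E /\
    [set b; f; g] \in E /\ [set c; h; i] \in E.

Definition crown_free (V : finType) (E : {set {set V}}) : Prop :=
  ~ has_crown E.

(* Main.v *)
Require Import Defs.
From mathcomp Require Import all_boot zify.
Set Implicit Arguments. Unset Strict Implicit. Unset Printing Implicit Defensive.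

Ltac neq := first [ done | assumption | rewrite eq_sym; assumption ].
Ltac neqs := rewrite ?inE ?negb_or; repeat (apply/andP; split); neq.

Lemma triple3 (V : finType) (f : {set V}) u v w :
  #|f| = 3 -> u \in f -> v \in f -> w \in f -> u != v -> u != w -> v != w ->
  f = [set u; v; w].
Proof.
move=> c3 hu hv hw uv uw vw; apply/esym/eqP; rewrite eqEcard c3.
have c3' : #|[set u; v; w]| = 3 by rewrite -setUA !cardsU1 cards1 !inE negb_or uv uw vw.
rewrite c3' andbT.
by apply/subsetP=> z; rewrite !inE => /orP[/orP[]|]/eqP->.
Qed.

Lemma triple2 (V : finType) (f : {set V}) u v :
  #|f| = 3 -> u \in f -> v \in f -> u != v ->
  exists w, [/\ f = [set u; v; w], u != w & v != w].
Proof.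
move=> c3 hu hv uv.
have : 0 < #|f :\: [set u; v]|.
  rewrite cardsD c3; have -> : f :&: [set u; v] = [set u; v].
    by apply/setIidPr/subsetP=> z; rewrite !inE => /orP[]/eqP->.
  by rewrite cards2 uv.
move/card_gt0P=> [w hw]; move: hw; rewrite !inE negb_or => /andP[/andP[wu wv] hw].
exists w; split; rewrite 1?eq_sym //; apply: triple3 => //; by rewrite eq_sym.
Qed.

Lemma triple1 (V : finType) (f : {set V}) u :
  #|f| = 3 -> u \in f ->
  exists v w, [/\ f = [set u; v; w], u != v, u != w & v != w].
Proof.
move=> c3 hu.
have : 0 < #|f :\ u| by rewrite cardsD c3 (setIidPr _) ?cards1 // sub1set.
case/card_gt0P=> v; rewrite !inE => /andP[vu hv].
have uv : u != v by rewrite eq_sym.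
have [w [-> h1 h2]] := triple2 c3 hu hv uv.
by exists v, w; split.
Qed.

Definition edges (V : finType) (E : {set {set V}}) (v : V) := [set f in E | v \in f].

Lemma degE (V : finType) (E : {set {set V}}) v : degree E v = #|edges E v|.
Proof. by []. Qed.

Lemma edge_eq (V : finType) (E : {set {set V}}) : is_linear_3graph E ->
  forall f g u v, f \in E -> g \in E -> u \in f -> v \in f -> u \in g -> v \in g ->
  u != v -> f = g.
Proof.
move=> [_ L] f g u v hf hg uf vf ug vg uv; apply/eqP/negPn/negP => fg.
have := L _ _ hf hg fg.
have : 1 < #|f :&: g| by apply/card_gt1P; exists u, v; rewrite !inE uf vf ug vg.
by case: #|_| => [|[|]].
Qed.

Lemma notin_other (V : finType) (E : {set {set V}}) : is_linear_3graph E ->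
  forall f g u v, f \in E -> g \in E -> f != g -> u \in f -> u \in g -> v \in g ->
  u != v -> v \notin f.
Proof.
move=> L f g u v hf hg fg uf ug vg uv; apply/negP => vf.
by move/eqP: fg; apply; apply: (edge_eq L hf hg uf vf ug vg uv).
Qed.

Lemma meetP (V : finType) (A B : {set V}) : ~~ [disjoint A & B] -> exists2 z, z \in A & z \in B.
Proof.
rewrite -setI_eq0 => /set0Pn [z]; rewrite inE => /andP[]; by exists z.
Qed.

Lemma avoid (V : finType) (E : {set {set V}}) : is_linear_3graph E ->
  forall v (F : {set {set V}}) (Z S : {set V}),
  (forall f, f \in F -> f \in E /\ v \in f) -> v \notin Z ->
  (forall f z, f \in F -> z \in Z -> z \in f -> z \in S) -> #|S| < #|F| ->
  exists2 f, f \in F & [disjoint f & Z].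
Proof.
move=> L v F Z S hF vZ hS cSF.
case: (boolP [exists (f | f \in F), [disjoint f & Z]]).
  by case/exists_inP=> f hf hd; exists f.
rewrite negb_exists_in => /forall_inP hnd.
pose g f := odflt v [pick z in f :&: Z].
have gP f : f \in F -> g f \in f /\ g f \in Z.
  move=> hf; rewrite /g; case: pickP => [z|].
    by rewrite !inE => /andP[].
  move=> h0; have [z hz1 hz2] := meetP (hnd f hf).
  by have := h0 z; rewrite !inE hz1 hz2.
have ginj : {in F &, injective g}.
  move=> f1 f2 h1 h2 e12.
  have [g1 z1] := gP f1 h1; have [g2 z2] := gP f2 h2.
  have [E1 v1] := hF f1 h1; have [E2 v2] := hF f2 h2.
  apply: (edge_eq L E1 E2 v1 g1 v2) => //; first by rewrite e12.
  by apply: contraNneq vZ => ->.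
have : #|[set g f | f in F]| <= #|S|.
  apply: subset_leq_card; apply/subsetP=> z /imsetP[f hf ->].
  by have [h1 h2] := gP f hf; apply: (hS f).
by rewrite card_in_imset // leqNgt cSF.
Qed.

Ltac split_all := repeat match goal with H : is_true (_ && _) |- _ => case/andP: H => ? ? end.

Lemma crown_sets (V : finType) (E : {set {set V}}) : is_linear_3graph E ->
  forall (Lc P Q R : {set V}) p q r,
  Lc \in E -> P \in E -> Q \in E -> R \in E -> p \in Lc -> q \in Lc -> r \in Lc ->
  p != q -> p != r -> q != r -> p \in P -> q \in Q -> r \in R ->
  P != Lc -> Q != Lc -> R != Lc ->
  [disjoint P & Q] -> [disjoint P & R] -> [disjoint Q & R] -> has_crown E.
Proof.
move=> L Lc P Q R p q r hL hP hQ hR pL qL rL pq pr qr pP qQ rR PL QL RL dPQ dPR dQR.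
have c3 := L.1.
have eL := triple3 (c3 _ hL) pL qL rL pq pr qr.
have [p1 [p2 [eP pp1 pp2 p12]]] := triple1 (c3 _ hP) pP.
have [q1 [q2 [eQ qq1 qq2 q12]]] := triple1 (c3 _ hQ) qQ.
have [r1 [r2 [eR rr1 rr2 r12]]] := triple1 (c3 _ hR) rR.
have LP : Lc != P by rewrite eq_sym.
have LQ : Lc != Q by rewrite eq_sym.
have LR : Lc != R by rewrite eq_sym.
have m1 : p1 \notin Lc by apply: (notin_other L hL hP LP pL pP) => //; rewrite ?eP ?eQ ?eR !inE eqxx ?orbT.
have m2 : p2 \notin Lc by apply: (notin_other L hL hP LP pL pP) => //; rewrite ?eP ?eQ ?eR !inE eqxx ?orbT.
have m3 : q1 \notin Lc by apply: (notin_other L hL hQ LQ qL qQ) => //; rewrite ?eP ?eQ ?eR !inE eqxx ?orbT.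
have m4 : q2 \notin Lc by apply: (notin_other L hL hQ LQ qL qQ) => //; rewrite ?eP ?eQ ?eR !inE eqxx ?orbT.
have m5 : r1 \notin Lc by apply: (notin_other L hL hR LR rL rR) => //; rewrite ?eP ?eQ ?eR !inE eqxx ?orbT.
have m6 : r2 \notin Lc by apply: (notin_other L hL hR LR rL rR) => //; rewrite ?eP ?eQ ?eR !inE eqxx ?orbT.
have inQ z : z \in [set q; q1; q2] -> z \notin P.
  by rewrite -eQ => zQ; rewrite (disjointFl dPQ zQ).
have inR z : z \in [set r; r1; r2] -> z \notin P.
  by rewrite -eR => zR; rewrite (disjointFl dPR zR).
have inR' z : z \in [set r; r1; r2] -> z \notin Q.
  by rewrite -eR => zR; rewrite (disjointFl dQR zR).
have n1 := inQ q1; have n2 := inQ q2; have n3 := inR r1; have n4 := inR r2.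
have n5 := inR' r1; have n6 := inR' r2.
rewrite !inE !eqxx ?orbT /= in n1 n2 n3 n4 n5 n6.
have {n1 n2 n3 n4 n5 n6} := (n1 isT, n2 isT, n3 isT, n4 isT, n5 isT, n6 isT).
rewrite eP eQ eL !inE !negb_or in m1 m2 m3 m4 m5 m6 * => -[[[[[n1 n2] n3] n4] n5] n6].
split_all.
exists p, q, r, p1, p2, q1, q2, r1, r2.
split; last by rewrite -eL -eP -eQ -eR.
rewrite /= !inE !negb_or; split_all; repeat (apply/andP; split); neq.
Qed.

Lemma card_edgesD (V : finType) (E : {set {set V}}) v (X : {set {set V}}) :
  degree E v - #|X| <= #|edges E v :\: X|.
Proof. by rewrite cardsD degE leq_sub2l // subset_leq_card // subsetIr. Qed.

Lemma card_set2 (T : finType) (a b : T) : #|[set a; b]| <= 2.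
Proof. by rewrite cards2; case: (a != b). Qed.

Lemma card_set3 (T : finType) (a b c : T) : #|[set a; b; c]| <= 3.
Proof. rewrite -setUA cardsU1 cards2; by case: (a \notin _); case: (b != c). Qed.

Lemma card_set4 (T : finType) (a b c d : T) : #|[set a; b; c; d]| <= 4.
Proof.
rewrite -!setUA cardsU1 cardsU1 cards2.
by case: (a \notin _); case: (b \notin _); case: (c != d).
Qed.

Lemma in_edgesD (V : finType) (E : {set {set V}}) v X f :
  f \in edges E v :\: X -> [/\ f \in E, v \in f & f \notin X].
Proof. by rewrite !inE => /andP[-> /andP[-> ->]]. Qed.

Lemma card3 (V : finType) (E : {set {set V}}) : is_linear_3graph E -> forall f, f \in E -> #|f| = 3.
Proof. by case. Qed.

Lemma greedy (V : finType) (E : {set {set V}}) : is_linear_3graph E -> ~ has_crown E ->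
  forall f p q r, f \in E -> p \in f -> q \in f -> r \in f -> p != q -> p != r -> q != r ->
  2 <= degree E p -> 4 <= degree E q -> 6 <= degree E r -> False.
Proof.
move=> L cf f p q r hf pf qf rf pq pr qr dp dq dr.
have qp : q != p by rewrite eq_sym.
have rp : r != p by rewrite eq_sym.
have rq : r != q by rewrite eq_sym.
have : 0 < #|edges E p :\: [set f]|.
  by apply: leq_trans (card_edgesD _ _ _); rewrite cards1 subn_gt0.
case/card_gt0P=> P /in_edgesD [hP pP]; rewrite inE => Pf.
have fP : f != P by rewrite eq_sym.
have qP : q \notin P by apply: (notin_other L hP hf Pf pP pf qf).
have [Q /in_edgesD [hQ qQ]] : exists2 Q, Q \in edges E q :\: [set f] & [disjoint Q & P].
  apply: (avoid L (v := q) (S := P :\ p)) => //.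
  - by move=> g /in_edgesD [-> ->].
  - move=> g z /in_edgesD [hg qg]; rewrite inE => gf zP zg.
    rewrite !inE zP andbT; apply/eqP => zp; move: zg; rewrite zp; apply/negP.
    exact: (notin_other L hg hf gf qg qf pf qp).
  - have := cardsD1 p P; have := card_edgesD E q [set f]; rewrite cards1 pP (card3 L hP).
    move: dq; clear; move: (#|_|) (#|_|) (degree E q) => x y d; lia.
rewrite inE => Qf dQP.
have rP : r \notin P by apply: (notin_other L hP hf Pf pP pf rf).
have rQ : r \notin Q by apply: (notin_other L hQ hf Qf qQ qf rf).
have [R /in_edgesD [hR rR]] : exists2 R, R \in edges E r :\: [set f] & [disjoint R & P :|: Q].
  apply: (avoid L (v := r) (S := (P :\ p) :|: (Q :\ q))) => //.
  - by move=> g /in_edgesD [-> ->].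
  - by rewrite inE negb_or rP rQ.
  - move=> g z /in_edgesD [hg rg]; rewrite inE => gf zPQ zg.
    have npg := notin_other L hg hf gf rg rf pf rp.
    have nqg := notin_other L hg hf gf rg rf qf rq.
    have zp : z != p by apply/eqP => ze; move: zg; rewrite ze; apply/negP.
    have zq : z != q by apply/eqP => ze; move: zg; rewrite ze; apply/negP.
    by move: zPQ; rewrite !inE zp zq.
  - have := cardsD1 p P; have := cardsD1 q Q; have := card_edgesD E r [set f].
    have := (leq_card_setU (P :\ p) (Q :\ q)).1.
    rewrite cards1 pP qQ (card3 L hP) (card3 L hQ).
    move: dr; clear; move: (#|_|) (#|_|) (#|_|) (#|_|) (degree E r) => x1 x2 x3 x4 d; lia.
rewrite inE => Rf dRPQ.
apply: cf; apply: (crown_sets L hf hP hQ hR pf qf rf pq pr qr pP qQ rR) => //.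
- by rewrite disjoint_sym.
- by rewrite disjoint_sym; apply: disjointWr dRPQ; apply: subsetUl.
- by rewrite disjoint_sym; apply: disjointWr dRPQ; apply: subsetUr.
Qed.

Ltac mem := by rewrite !inE ?eqxx ?orbT.

Lemma neq_mem (V : finType) (f g : {set V}) v : v \in f -> v \notin g -> f != g.
Proof. by move=> vf vg; apply: contraNneq vg => <-. Qed.

Lemma disj3 (V : finType) (S : {set V}) u v w :
  u \notin S -> v \notin S -> w \notin S -> [disjoint S & [set u; v; w]].
Proof.
move=> hu hv hw; rewrite -setI_eq0; apply/eqP/setP => z; rewrite !inE.
by apply/negP => /andP[zS /orP[/orP[]|]] /eqP ez; move: zS; rewrite ez ?(negbTE hu) ?(negbTE hv) ?(negbTE hw).
Qed.

Lemma disj3l (V : finType) (S : {set V}) u v w :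
  u \notin S -> v \notin S -> w \notin S -> [disjoint [set u; v; w] & S].
Proof. by move=> *; rewrite disjoint_sym disj3. Qed.

Lemma disjUl (V : finType) (A B C : {set V}) : [disjoint A & B :|: C] -> [disjoint A & B].
Proof. by move=> h; apply: disjointWr h; apply: subsetUl. Qed.

Lemma disjUr (V : finType) (A B C : {set V}) : [disjoint A & B :|: C] -> [disjoint A & C].
Proof. by move=> h; apply: disjointWr h; apply: subsetUr. Qed.

Lemma meet (V : finType) (E : {set {set V}}) : is_linear_3graph E -> ~ has_crown E ->
  forall (Lc M P Q : {set V}) p q r,
  Lc \in E -> M \in E -> P \in E -> Q \in E -> p \in Lc -> q \in Lc -> r \in Lc ->
  p != q -> p != r -> q != r -> r \in M -> p \in P -> q \in Q ->
  M != Lc -> P != Lc -> Q != Lc -> [disjoint P & M] -> [disjoint Q & M] ->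
  exists2 z, z \in P & z \in Q.
Proof.
move=> L cf Lc M P Q p q r hL hM hP hQ pL qL rL pq pr qr rM pP qQ ML PL QL dPM dQM.
case: (boolP [disjoint P & Q]) => [dPQ|]; last exact: meetP.
by case: cf; apply: (crown_sets L hL hP hQ hM pL qL rL pq pr qr pP qQ rM).
Qed.

Lemma cross (V : finType) (E : {set {set V}}) : is_linear_3graph E -> ~ has_crown E ->
  forall (Lc M : {set V}) p q r z,
  Lc \in E -> M \in E -> p \in Lc -> q \in Lc -> r \in Lc ->
  p != q -> p != r -> q != r -> q \in M -> z \in M -> q != z -> M != Lc ->
  4 <= degree E p -> 5 <= degree E r ->
  exists C, [/\ C \in E, r \in C & z \in C].
Proof.
move=> L cf Lc M p q r z hL hM pL qL rL pq pr qr qM zM qz ML dp dr.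
have qp : q != p by rewrite eq_sym.
have rp : r != p by rewrite eq_sym.
have rq : r != q by rewrite eq_sym.
have LM : Lc != M by rewrite eq_sym.
have [z' [eM qz' zz']] := triple2 (card3 L hM) qM zM qz.
have zL : z \notin Lc by apply: (notin_other L hL hM LM qL qM zM qz).
have z'L : z' \notin Lc by apply: (notin_other L hL hM LM qL qM) => //; rewrite eM; mem.
have [P0 /in_edgesD [hP pP]] : exists2 P0, P0 \in edges E p :\: [set Lc] & [disjoint P0 & [set z; z']].
  apply: (avoid L (v := p) (S := [set z; z'])) => //.
  - by move=> g /in_edgesD [-> ->].
  - rewrite !inE negb_or; apply/andP; split; [apply: contraNneq zL | apply: contraNneq z'L] => <- //.
  - apply: leq_trans (card_edgesD _ _ _); rewrite cards1.
    move: dp (card_set2 z z'); clear; move: (degree E p) (#|_|) => d k; lia.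
rewrite inE => PL dPz.
have LP : Lc != P0 by rewrite eq_sym.
have qP : q \notin P0 by apply: (notin_other L hP hL PL pP pL qL pq).
have rP : r \notin P0 by apply: (notin_other L hP hL PL pP pL rL pr).
have rM : r \notin M by apply: (notin_other L hM hL ML qM qL rL qr).
have zP : z \notin P0 by apply/negP => h; move: (disjointFr dPz h); rewrite !inE eqxx.
have z'P : z' \notin P0 by apply/negP => h; move: (disjointFr dPz h); rewrite !inE eqxx orbT.
case: (boolP [exists C, [&& C \in E, r \in C & z \in C]]).
  by case/existsP=> C /and3P[? ? ?]; exists C.
rewrite negb_exists => /forallP hno.
have [g /in_edgesD [hg rg]] : exists2 g, g \in edges E r :\: [set Lc] & [disjoint g & P0 :|: M].
  apply: (avoid L (v := r) (S := (P0 :\ p) :|: [set z'])) => //.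
  - by move=> g /in_edgesD [-> ->].
  - by rewrite inE negb_or rP rM.
  - move=> g z0 /in_edgesD [hg rg]; rewrite inE => gL zPM zg.
    have npg := notin_other L hg hL gL rg rL pL rp.
    have nqg := notin_other L hg hL gL rg rL qL rq.
    have zp : z0 != p by apply/eqP => ze; move: zg; rewrite ze; apply/negP.
    move: zPM; rewrite !inE zp /= => /orP[-> //|]; rewrite eM !inE => /orP[/orP[]|] /eqP ez.
    + by move: zg; rewrite ez (negbTE nqg).
    + by move: (hno g); rewrite hg rg -ez zg.
    + by rewrite ez eqxx orbT.
  - have := cardsD1 p P0; have := card_edgesD E r [set Lc].
    have := (leq_card_setU (P0 :\ p) [set z']).1.
    rewrite !cards1 pP (card3 L hP).
    move: dr; clear; move: (#|_|) (#|_|) (#|_|) (degree E r) => x1 x2 x3 d /=; lia.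
rewrite inE => gL dg.
case: cf; apply: (crown_sets L hL hP hM hg pL qL rL pq pr qr pP qM rg) => //.
- by rewrite eM disj3.
- by rewrite disjoint_sym; apply: disjUl dg.
- by rewrite disjoint_sym; apply: disjUr dg.
Qed.

Lemma final_pairs (V : finType) (E : {set {set V}}) : is_linear_3graph E ->
  forall (C1 C2 D1 D2 X : {set V}) c x z0 u1 u2 w1 w2,
  C1 \in E -> C2 \in E -> D1 \in E -> D2 \in E -> X \in E ->
  c \in C1 -> c \in C2 -> x \in D1 -> x \in D2 ->
  u1 \in C1 -> u1 \in D1 -> u2 \in C1 -> u2 \in D2 ->
  w1 \in C2 -> w1 \in D1 -> w2 \in C2 -> w2 \in D2 ->
  z0 \in X -> z0 \notin D1 -> z0 \notin D2 -> c \notin X ->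
  C1 != C2 -> D1 != D2 -> x \notin C1 -> x \notin C2 -> c \notin D1 -> c \notin D2 ->
  (exists2 s, s \in X & s \in C1) -> (exists2 t, t \in X & t \in C2) ->
  (u1 \in X /\ w2 \in X) \/ (u2 \in X /\ w1 \in X).
Proof.
move=> L C1 C2 D1 D2 X c x z0 u1 u2 w1 w2 hC1 hC2 hD1 hD2 hX cC1 cC2 xD1 xD2
  u1C1 u1D1 u2C1 u2D2 w1C2 w1D1 w2C2 w2D2 zX zD1 zD2 cX C12 D12 xC1 xC2 cD1 cD2 [s sX sC1] [t tX tC2].
have cu1 : c != u1 by apply: contraNneq cD1 => ->.
have cu2 : c != u2 by apply: contraNneq cD2 => ->.
have cw1 : c != w1 by apply: contraNneq cD1 => ->.
have cw2 : c != w2 by apply: contraNneq cD2 => ->.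
have xu1 : x != u1 by apply: contraNneq xC1 => ->.
have xw1 : x != w1 by apply: contraNneq xC2 => ->.
have xu2 : x != u2 by apply: contraNneq xC1 => ->.
have u12 : u1 != u2.
  by apply/eqP => eu; move/eqP: D12; apply; apply: (edge_eq L hD1 hD2 xD1 u1D1 xD2) => //; rewrite eu.
have w12 : w1 != w2.
  by apply/eqP => ew; move/eqP: D12; apply; apply: (edge_eq L hD1 hD2 xD1 w1D1 xD2) => //; rewrite ew.
have eC1 := triple3 (card3 L hC1) cC1 u1C1 u2C1 cu1 cu2 u12.
have eC2 := triple3 (card3 L hC2) cC2 w1C2 w2C2 cw1 cw2 w12.
have u1w1 : u1 != w1.
  by apply/eqP => eu; move/eqP: C12; apply; apply: (edge_eq L hC1 hC2 cC1 u1C1 cC2) => //; rewrite eu.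
have u2w2 : u2 != w2.
  by apply/eqP => eu; move/eqP: C12; apply; apply: (edge_eq L hC1 hC2 cC1 u2C1 cC2) => //; rewrite eu.
move: sC1 tC2; rewrite eC1 eC2 !inE => /orP[/orP[/eqP es|/eqP es]|/eqP es] /orP[/orP[/eqP et|/eqP et]|/eqP et].
all: subst; rewrite ?sX ?tX in cX *; try by [].
- have XD1 : X = D1 by apply: (edge_eq L hX hD1 sX tX u1D1 w1D1 u1w1).
  by move: zD1; rewrite -XD1 zX.
- by left.
- by right.
- have XD2 : X = D2 by apply: (edge_eq L hX hD2 sX tX u2D2 w2D2 u2w2).
  by move: zD2; rewrite -XD2 zX.
Qed.

Lemma final3 (V : finType) (E : {set {set V}}) : is_linear_3graph E ->
  forall (X1 X2 X3 : {set V}) u1 u2 w1 w2,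
  X1 \in E -> X2 \in E -> X3 \in E -> X1 != X2 -> X1 != X3 -> X2 != X3 ->
  u1 != w2 -> u2 != w1 ->
  (u1 \in X1 /\ w2 \in X1) \/ (u2 \in X1 /\ w1 \in X1) ->
  (u1 \in X2 /\ w2 \in X2) \/ (u2 \in X2 /\ w1 \in X2) ->
  (u1 \in X3 /\ w2 \in X3) \/ (u2 \in X3 /\ w1 \in X3) -> False.
Proof.
move=> L X1 X2 X3 u1 u2 w1 w2 h1 h2 h3 n12 n13 n23 uw1 uw2.
have K : forall Y Z u w, Y \in E -> Z \in E -> Y != Z -> u != w -> u \in Y -> w \in Y -> u \in Z -> w \in Z -> False.
  by move=> Y Z u w hY hZ YZ uw uY wY uZ wZ; move/eqP: YZ; apply; apply: (edge_eq L hY hZ uY wY uZ wZ uw).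
case=> [[a1 b1]|[a1 b1]] [[a2 b2]|[a2 b2]] [[a3 b3]|[a3 b3]].
all: first [ exact: (K _ _ _ _ h1 h2 n12 uw1 a1 b1 a2 b2) | exact: (K _ _ _ _ h1 h3 n13 uw1 a1 b1 a3 b3)
  | exact: (K _ _ _ _ h2 h3 n23 uw1 a2 b2 a3 b3) | exact: (K _ _ _ _ h1 h2 n12 uw2 a1 b1 a2 b2)
  | exact: (K _ _ _ _ h1 h3 n13 uw2 a1 b1 a3 b3) | exact: (K _ _ _ _ h2 h3 n23 uw2 a2 b2 a3 b3) ].
Qed.

Ltac expand H := rewrite !inE ?negb_or in H; split_all.

Lemma two_bad (V : finType) (E : {set {set V}}) : is_linear_3graph E -> ~ has_crown E ->
  forall (e B : {set V}) a b c x y,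
  e \in E -> B \in E -> a \in e -> b \in e -> c \in e -> b \in B -> x \in B -> y \in B ->
  a != b -> a != c -> b != c -> b != x -> b != y -> x != y -> e != B ->
  4 <= degree E a -> 5 <= degree E b -> 5 <= degree E c -> 5 <= degree E x -> 4 <= degree E y ->
  False.
Proof.
move=> L cf e B a b c x y he hB ae be ce bB xB yB ab ac bc bx b_y xy eB da db dc dx dy.
have ee := triple3 (card3 L he) ae be ce ab ac bc.
have eBB := triple3 (card3 L hB) bB xB yB bx b_y xy.
have xe : x \notin e by apply: (notin_other L he hB eB be bB xB bx).
have ye : y \notin e by apply: (notin_other L he hB eB be bB yB b_y).
have Be : B != e by rewrite eq_sym.
have aB : a \notin B by apply: (notin_other L hB he Be bB be ae); rewrite eq_sym.
have cB : c \notin B by apply: (notin_other L hB he Be bB be ce).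
have [Cx [hCx cCx xCx]] := cross L cf he hB ae be ce ab ac bc bB xB bx Be da dc.
have [Cy [hCy cCy yCy]] := cross L cf he hB ae be ce ab ac bc bB yB b_y Be da dc.
have ba : b != a by rewrite eq_sym.
have yx : y != x by rewrite eq_sym.
have yb : y != b by rewrite eq_sym.
have [Ax [hAx xAx aAx]] := cross L cf hB he yB bB xB yb yx bx be ae ba eB dy dx.
move: cf => NC.
have ca : c != a by rewrite eq_sym.
have cb : c != b by rewrite eq_sym.
have cx : c != x by apply: contraNneq cB => ->.
have cy : c != y by apply: contraNneq cB => ->.
have ax : a != x by apply: contraNneq aB => ->.
have ay : a != y by apply: contraNneq aB => ->.
have xb : x != b by rewrite eq_sym.
have [x2 [eCx cx2 xx2]] := triple2 (card3 L hCx) cCx xCx cx.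
subst Cx.
have Cxe := neq_mem xCx xe.
have aCx := notin_other L hCx he Cxe cCx ce ae ca.
have bCx := notin_other L hCx he Cxe cCx ce be cb.
have CxB := neq_mem cCx cB.
have yCx := notin_other L hCx hB CxB xCx xB yB xy.
have [x3 [eAx ax3 xx3]] := triple2 (card3 L hAx) aAx xAx ax.
subst Ax.
have Axe := neq_mem xAx xe.
have bAx := notin_other L hAx he Axe aAx ae be ab.
have cAx := notin_other L hAx he Axe aAx ae ce ac.
have AxB := neq_mem aAx aB.
have yAx := notin_other L hAx hB AxB xAx xB yB xy.
have AxCx := neq_mem aAx aCx.
have x2Cx : x2 \in [set c; x; x2] by mem.
have x2Ax := notin_other L hAx hCx AxCx xAx xCx x2Cx xx2.
have [y2 [eCy cy2 yy2]] := triple2 (card3 L hCy) cCy yCy cy.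
subst Cy.
have Cye := neq_mem yCy ye.
have aCy := notin_other L hCy he Cye cCy ce ae ca.
have bCy := notin_other L hCy he Cye cCy ce be cb.
have CyB := neq_mem cCy cB.
have xCy := notin_other L hCy hB CyB yCy yB xB yx.
subst e B.
expand xe; expand ye; expand aB; expand cB; expand aCx; expand bCx; expand yCx.
expand bAx; expand cAx; expand yAx; expand x2Ax; expand aCy; expand bCy; expand xCy.
case: (eqVneq y2 x3) => [ey|ny]; last first.
  have [f /in_edgesD [hf bf]] : exists2 f, f \in edges E b :\: [set [set a; b; c]; [set b; x; y]]
      & [disjoint f & [set x3; y2]].
    apply: (avoid L (v := b) (S := [set x3; y2])) => //.
    - by move=> g /in_edgesD [-> ->].
    - neqs.
    - apply: leq_trans (card_edgesD _ _ _).
      move: db (card_set2 [set a; b; c] [set b; x; y]) (card_set2 x3 y2); clear.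
      move: (degree E b) (#|_|) (#|_|) => d k1 k2; lia.
  rewrite !inE negb_or => /andP[fe fB] dfz.
  have af := notin_other L hf he fe bf be ae ba.
  have xf := notin_other L hf hB fB bf bB xB bx.
  have cf := notin_other L hf he fe bf be ce bc.
  have yf := notin_other L hf hB fB bf bB yB b_y.
  have x3f : x3 \notin f by apply/negP => h; move: (disjointFr dfz h); rewrite !inE eqxx.
  have y2f : y2 \notin f by apply/negP => h; move: (disjointFr dfz h); rewrite !inE eqxx orbT.
  apply: NC; apply: (crown_sets L he hAx hf hCy ae be ce ab ac bc aAx bf cCy) => //.
  - exact: disj3l.
  - by apply: disj3l; neqs.
  - exact: disj3.
subst y2.
have [A' /in_edgesD [hA' aA']] : exists2 A', A' \in edges E a :\: [set [set a; b; c]]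
    & [disjoint A' & [set x; x2]].
  apply: (avoid L (v := a) (S := [set x; x2])) => //.
  - by move=> g /in_edgesD [-> ->].
  - neqs.
  - apply: leq_trans (card_edgesD _ _ _); rewrite cards1.
    move: da (card_set2 x x2); clear; move: (degree E a) (#|_|) => d k; lia.
rewrite !inE => A'e dA'.
have cA' := notin_other L hA' he A'e aA' ae ce ac.
have bA' := notin_other L hA' he A'e aA' ae be ab.
have xA' : x \notin A' by apply/negP => h; move: (disjointFr dA' h); rewrite !inE eqxx.
have x2A' : x2 \notin A' by apply/negP => h; move: (disjointFr dA' h); rewrite !inE eqxx orbT.
have [Bx2 [hBx2 bBx2 x2Bx2]] : exists Bx2, [/\ Bx2 \in E, b \in Bx2 & x2 \in Bx2].
  case: (boolP [exists g, [&& g \in E, b \in g & x2 \in g]]).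
    by case/existsP=> g /and3P[? ? ?]; exists g.
  rewrite negb_exists => /forallP hno.
  have [g /in_edgesD [hg bg]] : exists2 g, g \in edges E b :\: [set [set a; b; c]; [set b; x; y]]
      & [disjoint g & A' :|: [set x2]].
    apply: (avoid L (v := b) (S := A' :\ a)) => //.
    - by move=> g /in_edgesD [-> ->].
    - by rewrite !inE negb_or bA' /=; neq.
    - move=> g z /in_edgesD [hg bg]; rewrite !inE negb_or => /andP[ge gB] zZ zg.
      have ag := notin_other L hg he ge bg be ae ba.
      move: zZ => /orP[zA'|/eqP ez].
        by rewrite zA' andbT; apply: contraNneq ag => <-.
      by move: (hno g); rewrite hg bg -ez zg.
    - have := cardsD1 a A'; have := card_edgesD E b [set [set a; b; c]; [set b; x; y]].
      have := card_set2 [set a; b; c] [set b; x; y].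
      rewrite aA' (card3 L hA').
      move: db; clear; move: (#|_|) (#|_|) (#|_|) (degree E b) => x1 x2 x3 d /=; lia.
  rewrite !inE negb_or => /andP[ge gB] dg.
  have cg := notin_other L hg he ge bg be ce bc.
  have xg := notin_other L hg hB gB bg bB xB bx.
  have x2g : x2 \notin g by apply/negP => h; move: (disjointFr dg h); rewrite !inE eqxx orbT.
  case: NC; apply: (crown_sets L he hA' hg hCx ae be ce ab ac bc aA' bg cCx) => //.
  - by rewrite disjoint_sym; apply: disjUl dg.
  - exact: disj3.
  - exact: disj3.
have bx2 : b != x2 by neq.
have [r0 [eBx2 br0 x2r0]] := triple2 (card3 L hBx2) bBx2 x2Bx2 bx2.
subst Bx2.
have x2e : x2 \notin [set a; b; c] by neqs.
have Bx2e := neq_mem x2Bx2 x2e.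
have aBx2 := notin_other L hBx2 he Bx2e bBx2 be ae ba.
have cBx2 := notin_other L hBx2 he Bx2e bBx2 be ce bc.
have x2B : x2 \notin [set b; x; y] by neqs.
have Bx2B := neq_mem x2Bx2 x2B.
have xBx2 := notin_other L hBx2 hB Bx2B bBx2 bB xB bx.
expand aBx2; expand cBx2; expand xBx2.
case: (eqVneq r0 x3) => [er|nr]; last first.
  have [f /in_edgesD [hf cF]] : exists2 f, f \in edges E c :\:
      [set [set a; b; c]; [set c; x; x2]; [set c; y; x3]] & [disjoint f & [set r0]].
    apply: (avoid L (v := c) (S := [set r0])) => //.
    - by move=> g /in_edgesD [-> ->].
    - neqs.
    - apply: leq_trans (card_edgesD _ _ _); rewrite cards1.
      move: dc (card_set3 [set a; b; c] [set c; x; x2] [set c; y; x3]); clear.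
      move: (degree E c) (#|_|) => d k; lia.
  rewrite !inE !negb_or => /andP[/andP[fe fCx] fCy] dfr.
  have af := notin_other L hf he fe cF ce ae ca.
  have bf := notin_other L hf he fe cF ce be cb.
  have xf := notin_other L hf hCx fCx cF cCx xCx cx.
  have x2f := notin_other L hf hCx fCx cF cCx x2Cx cx2.
  have x3Cy : x3 \in [set c; y; x3] by mem.
  have x3f := notin_other L hf hCy fCy cF cCy x3Cy cy2.
  have r0f : r0 \notin f by apply/negP => h; move: (disjointFr dfr h); rewrite !inE eqxx.
  have bCx' : b \notin [set c; x; x2] by neqs.
  have Bx2Cx := neq_mem bBx2 bCx'.
  case: NC; apply: (crown_sets L hCx hAx hBx2 hf xCx x2Cx cCx) => //; try neq.
  - by apply: disj3l; neqs.
  - exact: disj3l.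
  - exact: disj3l.
subst r0.
have x3Cy : x3 \in [set c; y; x3] by mem.
have x2B' : x2 \in [set b; x2; x3] by mem.
have x3Ax : x3 \in [set a; x; x3] by mem.
have [C1 [C2 [/in_edgesD [hC1 cC1 C1n] /in_edgesD [hC2 cC2 C2n] C12]]] :
    exists C1 C2, [/\ C1 \in edges E c :\: [set [set a; b; c]; [set c; x; x2]; [set c; y; x3]],
    C2 \in edges E c :\: [set [set a; b; c]; [set c; x; x2]; [set c; y; x3]] & C1 != C2].
  apply/card_gt1P; apply: leq_trans (card_edgesD _ _ _).
  move: dc (card_set3 [set a; b; c] [set c; x; x2] [set c; y; x3]); clear.
  move: (degree E c) (#|_|) => d k; lia.
move: C1n C2n; rewrite !inE !negb_or => /andP[/andP[C1e C1x] C1y] /andP[/andP[C2e C2x] C2y].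
have [D1 [D2 [/in_edgesD [hD1 xD1 D1n] /in_edgesD [hD2 xD2 D2n] D12]]] :
    exists D1 D2, [/\ D1 \in edges E x :\: [set [set b; x; y]; [set c; x; x2]; [set a; x; x3]],
    D2 \in edges E x :\: [set [set b; x; y]; [set c; x; x2]; [set a; x; x3]] & D1 != D2].
  apply/card_gt1P; apply: leq_trans (card_edgesD _ _ _).
  move: dx (card_set3 [set b; x; y] [set c; x; x2] [set a; x; x3]); clear.
  move: (degree E x) (#|_|) => d k; lia.
move: D1n D2n; rewrite !inE !negb_or => /andP[/andP[D1B D1x] D1a] /andP[/andP[D2B D2x] D2a].
have [b1 [b2 [/in_edgesD [hb1 bb1 b1n] /in_edgesD [hb2 bb2 b2n] b12]]] :
    exists b1 b2, [/\ b1 \in edges E b :\: [set [set a; b; c]; [set b; x; y]; [set b; x2; x3]],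
    b2 \in edges E b :\: [set [set a; b; c]; [set b; x; y]; [set b; x2; x3]] & b1 != b2].
  apply/card_gt1P; apply: leq_trans (card_edgesD _ _ _).
  move: db (card_set3 [set a; b; c] [set b; x; y] [set b; x2; x3]); clear.
  move: (degree E b) (#|_|) => d k; lia.
move: b1n b2n; rewrite !inE !negb_or => /andP[/andP[b1e b1B] b1B'] /andP[/andP[b2e b2B] b2B'].
have [Y /in_edgesD [hY yY]] : exists2 Y, Y \in edges E y :\: [set [set b; x; y]; [set c; y; x3]]
    & [disjoint Y & [set a]].
  apply: (avoid L (v := y) (S := [set a])) => //.
  - by move=> g /in_edgesD [-> ->].
  - neqs.
  - apply: leq_trans (card_edgesD _ _ _); rewrite cards1.
    move: dy (card_set2 [set b; x; y] [set c; y; x3]); clear.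
    move: (degree E y) (#|_|) => d k; lia.
rewrite !inE !negb_or => /andP[YB YCy] dYa.
have aY : a \notin Y by apply/negP => h; move: (disjointFr dYa h); rewrite !inE eqxx.
have x2c : x2 != c by neq.
have x3c : x3 != c by neq.
have x3b : x3 != b by neq.
have x2b : x2 != b by neq.
have x2x3 : x2 != x3 by neq.
have aC1 := notin_other L hC1 he C1e cC1 ce ae ca.
have bC1 := notin_other L hC1 he C1e cC1 ce be cb.
have xC1 := notin_other L hC1 hCx C1x cC1 cCx xCx cx.
have x2C1 := notin_other L hC1 hCx C1x cC1 cCx x2Cx cx2.
have x3C1 := notin_other L hC1 hCy C1y cC1 cCy x3Cy cy2.
have aC2 := notin_other L hC2 he C2e cC2 ce ae ca.
have bC2 := notin_other L hC2 he C2e cC2 ce be cb.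
have xC2 := notin_other L hC2 hCx C2x cC2 cCx xCx cx.
have x2C2 := notin_other L hC2 hCx C2x cC2 cCx x2Cx cx2.
have x3C2 := notin_other L hC2 hCy C2y cC2 cCy x3Cy cy2.
have bD1 := notin_other L hD1 hB D1B xD1 xB bB xb.
have yD1 := notin_other L hD1 hB D1B xD1 xB yB xy.
have xc : x != c by neq.
have xa : x != a by neq.
have yc : y != c by neq.
have cD1 := notin_other L hD1 hCx D1x xD1 xCx cCx xc.
have x2D1 := notin_other L hD1 hCx D1x xD1 xCx x2Cx xx2.
have aD1 := notin_other L hD1 hAx D1a xD1 xAx aAx xa.
have x3D1 := notin_other L hD1 hAx D1a xD1 xAx x3Ax xx3.
have bD2 := notin_other L hD2 hB D2B xD2 xB bB xb.
have yD2 := notin_other L hD2 hB D2B xD2 xB yB xy.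
have cD2 := notin_other L hD2 hCx D2x xD2 xCx cCx xc.
have x2D2 := notin_other L hD2 hCx D2x xD2 xCx x2Cx xx2.
have aD2 := notin_other L hD2 hAx D2a xD2 xAx aAx xa.
have x3D2 := notin_other L hD2 hAx D2a xD2 xAx x3Ax xx3.
have x3B' : x3 \in [set b; x2; x3] by mem.
have ab1 := notin_other L hb1 he b1e bb1 be ae ba.
have cb1 := notin_other L hb1 he b1e bb1 be ce bc.
have xb1 := notin_other L hb1 hB b1B bb1 bB xB bx.
have yb1 := notin_other L hb1 hB b1B bb1 bB yB b_y.
have x2b1 := notin_other L hb1 hBx2 b1B' bb1 bBx2 x2B' bx2.
have x3b1 := notin_other L hb1 hBx2 b1B' bb1 bBx2 x3B' br0.
have ab2 := notin_other L hb2 he b2e bb2 be ae ba.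
have cb2 := notin_other L hb2 he b2e bb2 be ce bc.
have xb2 := notin_other L hb2 hB b2B bb2 bB xB bx.
have yb2 := notin_other L hb2 hB b2B bb2 bB yB b_y.
have x2b2 := notin_other L hb2 hBx2 b2B' bb2 bBx2 x2B' bx2.
have x3b2 := notin_other L hb2 hBx2 b2B' bb2 bBx2 x3B' br0.
have bY := notin_other L hY hB YB yY yB bB yb.
have xY := notin_other L hY hB YB yY yB xB yx.
have cY := notin_other L hY hCy YCy yY yCy cCy yc.
have x3Y := notin_other L hY hCy YCy yY yCy x3Cy yy2.
have bCx' : b \notin [set c; x; x2] by neqs.
have B'Cx := neq_mem bBx2 bCx'.
have aCy' : a \notin [set c; y; x3] by neqs.
have AxCy := neq_mem aAx aCy'.
have [u1 u1C1 u1D1] := meet L NC hCx hBx2 hC1 hD1 cCx xCx x2Cx cx cx2 xx2 x2B' cC1 xD1 B'Cx C1x D1x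
  (disj3 bC1 x2C1 x3C1) (disj3 bD1 x2D1 x3D1).
have [u2 u2C1 u2D2] := meet L NC hCx hBx2 hC1 hD2 cCx xCx x2Cx cx cx2 xx2 x2B' cC1 xD2 B'Cx C1x D2x
  (disj3 bC1 x2C1 x3C1) (disj3 bD2 x2D2 x3D2).
have [w1 w1C2 w1D1] := meet L NC hCx hBx2 hC2 hD1 cCx xCx x2Cx cx cx2 xx2 x2B' cC2 xD1 B'Cx C2x D1x
  (disj3 bC2 x2C2 x3C2) (disj3 bD1 x2D1 x3D1).
have [w2 w2C2 w2D2] := meet L NC hCx hBx2 hC2 hD2 cCx xCx x2Cx cx cx2 xx2 x2B' cC2 xD2 B'Cx C2x D2x
  (disj3 bC2 x2C2 x3C2) (disj3 bD2 x2D2 x3D2).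
have mb1C1 := meet L NC he hAx hb1 hC1 be ce ae bc ba ca aAx bb1 cC1 Axe b1e C1e
  (disj3 ab1 xb1 x3b1) (disj3 aC1 xC1 x3C1).
have mb1C2 := meet L NC he hAx hb1 hC2 be ce ae bc ba ca aAx bb1 cC2 Axe b1e C2e
  (disj3 ab1 xb1 x3b1) (disj3 aC2 xC2 x3C2).
have mb2C1 := meet L NC he hAx hb2 hC1 be ce ae bc ba ca aAx bb2 cC1 Axe b2e C1e
  (disj3 ab2 xb2 x3b2) (disj3 aC1 xC1 x3C1).
have mb2C2 := meet L NC he hAx hb2 hC2 be ce ae bc ba ca aAx bb2 cC2 Axe b2e C2e
  (disj3 ab2 xb2 x3b2) (disj3 aC2 xC2 x3C2).
have mYC1 := meet L NC hCy hAx hY hC1 yCy cCy x3Cy yc yy2 cy2 x3Ax yY cC1 AxCy YCy C1y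
  (disj3 aY xY x3Y) (disj3 aC1 xC1 x3C1).
have mYC2 := meet L NC hCy hAx hY hC2 yCy cCy x3Cy yc yy2 cy2 x3Ax yY cC2 AxCy YCy C2y
  (disj3 aY xY x3Y) (disj3 aC2 xC2 x3C2).
have P1 := final_pairs L hC1 hC2 hD1 hD2 hb1 cC1 cC2 xD1 xD2 u1C1 u1D1 u2C1 u2D2 w1C2 w1D1 w2C2 w2D2
  bb1 bD1 bD2 cb1 C12 D12 xC1 xC2 cD1 cD2 mb1C1 mb1C2.
have P2 := final_pairs L hC1 hC2 hD1 hD2 hb2 cC1 cC2 xD1 xD2 u1C1 u1D1 u2C1 u2D2 w1C2 w1D1 w2C2 w2D2
  bb2 bD1 bD2 cb2 C12 D12 xC1 xC2 cD1 cD2 mb2C1 mb2C2.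
have P3 := final_pairs L hC1 hC2 hD1 hD2 hY cC1 cC2 xD1 xD2 u1C1 u1D1 u2C1 u2D2 w1C2 w1D1 w2C2 w2D2
  yY yD1 yD2 cY C12 D12 xC1 xC2 cD1 cD2 mYC1 mYC2.
have uw1 : u1 != w2.
  apply/eqP => eu; move/eqP: C12; apply; apply: (edge_eq L hC1 hC2 cC1 u1C1 cC2) => //; first by rewrite eu.
  by apply: contraNneq cD1 => ->.
have uw2 : u2 != w1.
  apply/eqP => eu; move/eqP: C12; apply; apply: (edge_eq L hC1 hC2 cC1 u2C1 cC2) => //; first by rewrite eu.
  by apply: contraNneq cD2 => ->.
exact: (final3 L hb1 hb2 hY b12 (neq_mem bb1 bY) (neq_mem bb2 bY) uw1 uw2 P1 P2 P3).
Qed.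

Definition bad (V : finType) (E : {set {set V}}) (f : {set V}) (v : V) : bool :=
  [exists u, exists w, [&& u \in f, w \in f, u != v, w != v, u != w,
     degree E u == 5 & (4 <= degree E w) && (degree E w <= 5)]].

Definition wt (V : finType) (E : {set {set V}}) (f : {set V}) (v : V) : nat :=
  match degree E v with
  | 1 => 180 | 2 => 90 | 3 => 60 | 4 => 45
  | 5 => if bad E f v then 60 else 30
  | _ => 0 end.

Lemma bad_uniq (V : finType) (E : {set {set V}}) : is_linear_3graph E -> ~ has_crown E ->
  forall v f1 f2, degree E v = 5 -> f1 \in E -> f2 \in E -> v \in f1 -> v \in f2 ->
  bad E f1 v -> bad E f2 v -> f1 = f2.
Proof.
move=> L NC v f1 f2 dv h1 h2 v1 v2.
move=> /existsP[u1 /existsP[w1 /and5P[u1f w1f u1v w1v /and3P[uw1 du1 /andP[dw1 dw1']]]]].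
move=> /existsP[u2 /existsP[w2 /and5P[u2f w2f u2v w2v /and3P[uw2 du2 /andP[dw2 dw2']]]]].
case: (eqVneq f1 f2) => // f12; exfalso.
apply: (two_bad L NC h1 h2 w1f v1 u1f v2 u2f w2f) => //; try by rewrite eq_sym.
- by rewrite dv.
- by rewrite (eqP du1).
- by rewrite (eqP du2).
Qed.

Lemma vertex_sum (V : finType) (E : {set {set V}}) : is_linear_3graph E -> ~ has_crown E ->
  forall v, \sum_(f in edges E v) wt E f v <= (if 6 <= degree E v then 0 else 180).
Proof.
move=> L NC v.
have hc : #|edges E v| = degree E v by [].
rewrite /wt; move: hc; move Hd: (degree E v) => d hc.
case: d Hd hc => [|[|[|[|[|[|d]]]]]] Hd hc /=; rewrite ?sum_nat_const ?hc //.
case: (boolP [exists f in edges E v, bad E f v]) => [/exists_inP [f0 hf0 b0] | hn].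
  rewrite (bigD1 f0) //= b0.
  rewrite (eq_bigr (fun _ => 30)); last first.
    move=> f /andP[hf ff0]; case: ifP => // bf.
    move: hf0 hf; rewrite !inE => /andP[h0 v0] /andP[h1 v1].
    by move: ff0; rewrite (bad_uniq L NC Hd h1 h0 v1 v0 bf b0) eqxx.
  rewrite (eq_bigl (mem (edges E v :\ f0))); last by move=> f; rewrite !inE andbC.
  rewrite sum_nat_const.
  move: (cardsD1 f0 (edges E v)); rewrite hc hf0.
  move: (#|edges E v :\ f0|) => k h; have -> : k = 4 by move: h; clear; lia.
  done.
rewrite (eq_bigr (fun _ => 30)) ?sum_nat_const ?hc //.
move=> f hf; case: ifP => // bf.
by move: hn; rewrite negb_exists_in => /forall_inP /(_ f hf); rewrite bf.
by rewrite muln0.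
Qed.

Lemma deg_pos (V : finType) (E : {set {set V}}) f v : f \in E -> v \in f -> 0 < degree E v.
Proof. by move=> hf vf; apply/card_gt0P; exists f; rewrite inE hf vf. Qed.

Lemma wt_facts (V : finType) (E : {set {set V}}) (f : {set V}) (v u w : V) :
  u \in f -> w \in f -> u != v -> w != v -> u != w ->
  [/\ degree E v = 1 -> wt E f v = 180, degree E v = 2 -> wt E f v = 90,
      degree E v = 3 -> wt E f v = 60, degree E v = 4 -> wt E f v = 45 &
      degree E v = 5 -> 30 <= wt E f v /\
        ((degree E u = 5 /\ 4 <= degree E w <= 5) \/ (degree E w = 5 /\ 4 <= degree E u <= 5) ->
         wt E f v = 60)].
Proof.
move=> uf wf uv wv uw; rewrite /wt; split => -> //; split; first by case: ifP.
move=> H; have -> // : bad E f v.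
case: H => [[du dw]|[dw du]]; apply/existsP.
- by exists u; apply/existsP; exists w; rewrite uf wf uv wv uw du eqxx dw.
- exists w; apply/existsP; exists u; rewrite uf wf uv wv dw du eqxx /=.
  by rewrite eq_sym uw.
Qed.

Definition LBv (d x y : nat) : nat :=
  if d == 1 then 180 else if d == 2 then 90 else if d == 3 then 60 else if d == 4 then 45
  else if d == 5 then (if ((x == 5) && (4 <= y <= 5)) || ((y == 5) && (4 <= x <= 5)) then 60 else 30)
  else 0.

Definition greedyb (a b c : nat) : bool :=
  [&& ~~ [&& 2 <= a, 4 <= b & 6 <= c], ~~ [&& 2 <= a, 4 <= c & 6 <= b],
      ~~ [&& 2 <= b, 4 <= a & 6 <= c], ~~ [&& 2 <= b, 4 <= c & 6 <= a],
      ~~ [&& 2 <= c, 4 <= a & 6 <= b] & ~~ [&& 2 <= c, 4 <= b & 6 <= a]].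

Lemma arith_check :
  all (fun a => all (fun b => all (fun c =>
    [&& 0 < a, 0 < b, 0 < c & greedyb a b c] ==>
    (120 <= LBv a b c + LBv b a c + LBv c a b)) (iota 0 7)) (iota 0 7)) (iota 0 7).
Proof. by vm_compute. Qed.

Lemma minn6_eq5 d : (minn d 6 == 5) = (d == 5).
Proof. by rewrite /minn; case: ltnP => // h; apply/esym/eqP => e; move: h; rewrite e. Qed.

Lemma minn6_ge k d : k <= 6 -> (k <= minn d 6) = (k <= d).
Proof. by move=> hk; rewrite leq_min hk andbT. Qed.

Lemma minn6_le5 d : (minn d 6 <= 5) = (d <= 5).
Proof. by rewrite geq_min orbF. Qed.

Lemma lb_wt (V : finType) (E : {set {set V}}) (f : {set V}) (v u w : V) :
  u \in f -> w \in f -> u != v -> w != v -> u != w ->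
  LBv (minn (degree E v) 6) (minn (degree E u) 6) (minn (degree E w) 6) <= wt E f v.
Proof.
move=> uf wf uv wv uw.
have [h1 h2 h3 h4 h5] := wt_facts E uf wf uv wv uw.
rewrite /LBv !minn6_eq5 !minn6_ge // !minn6_le5.
case: (degree E v) h1 h2 h3 h4 h5 => [|[|[|[|[|[|d]]]]]] h1 h2 h3 h4 h5 //=;
  try by [rewrite (h1 erefl) | rewrite (h2 erefl) | rewrite (h3 erefl) | rewrite (h4 erefl)].
have [h5a h5b] := h5 erefl.
case: ifP => // /orP[/andP[/eqP du dw]|/andP[/eqP dw du]].
  by rewrite h5b //; left.
by rewrite h5b //; right.
Qed.

Lemma edge_sum (V : finType) (E : {set {set V}}) : is_linear_3graph E -> ~ has_crown E ->
  forall f, f \in E -> 120 <= \sum_(v in f) wt E f v.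
Proof.
move=> L NC f hf.
have c3 := card3 L hf.
have : 0 < #|f| by rewrite c3.
case/card_gt0P=> p pf.
have [q [r [ef pq pr qr]]] := triple1 c3 pf.
have qf : q \in f by rewrite ef; mem.
have rf : r \in f by rewrite ef; mem.
have qp : q != p by rewrite eq_sym.
have rp : r != p by rewrite eq_sym.
have rq : r != q by rewrite eq_sym.
have -> : \sum_(v in f) wt E f v = wt E f p + wt E f q + wt E f r.
  rewrite {1}ef -setUA big_setU1 /=; last by rewrite !inE negb_or pq pr.
  by rewrite big_setU1 /= ?big_set1 ?addnA // inE.
have l1 := lb_wt E qf rf qp rp qr.
have l2 := lb_wt E pf rf pq rq pr.
have l3 := lb_wt E pf qf pr qr pq.
have dp := deg_pos hf pf; have dq := deg_pos hf qf; have dr := deg_pos hf rf.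
have g1 := greedy L NC hf pf qf rf pq pr qr.
have g2 := greedy L NC hf pf rf qf pr pq rq.
have g3 := greedy L NC hf qf pf rf qp qr pr.
have g4 := greedy L NC hf qf rf pf qr qp rp.
have g5 := greedy L NC hf rf pf qf rp rq pq.
have g6 := greedy L NC hf rf qf pf rq rp qp.
have gb : greedyb (minn (degree E p) 6) (minn (degree E q) 6) (minn (degree E r) 6).
  rewrite /greedyb !minn6_ge //.
  repeat (apply/andP; split); apply/negP => /and3P[k1 k2 k3];
    solve [ exact: g1 k1 k2 k3 | exact: g2 k1 k2 k3 | exact: g3 k1 k2 k3 | exact: g4 k1 k2 k3
          | exact: g5 k1 k2 k3 | exact: g6 k1 k2 k3 ].
have mlt d : minn d 6 \in iota 0 7 by rewrite mem_iota /= ltnS geq_min leqnn orbT.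
have := allP arith_check _ (mlt (degree E p)).
move=> /allP /(_ _ (mlt (degree E q))) /allP /(_ _ (mlt (degree E r))).
rewrite !minn6_ge // dp dq dr gb /= => H.
by apply: leq_trans H _; rewrite -!addnA; apply: leq_add => //; apply: leq_add.
Qed.

Theorem theorem1p1 (V : finType) (E : {set {set V}}) :
  is_linear_3graph E -> crown_free E ->
  2 * #|E| <= 3 * (#|V| - #|[set v : V | 6 <= degree E v]|).
Proof.
move=> L NC.
set H := [set v : V | 6 <= degree E v].
have S1 : 120 * #|E| <= \sum_(f in E) \sum_(v in f) wt E f v.
  rewrite mulnC -sum_nat_const; apply: leq_sum => f hf; exact: edge_sum.
have S2 : \sum_(f in E) \sum_(v in f) wt E f v = \sum_v \sum_(f in edges E v) wt E f v.
  rewrite (exchange_big_dep predT) //=; apply: eq_bigr => v _; apply: eq_bigl => f.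
  by rewrite inE.
have S3 : \sum_v \sum_(f in edges E v) wt E f v <= #|~: H| * 180.
  apply: (@leq_trans (\sum_v (if 6 <= degree E v then 0 else 180))).
    by apply: leq_sum => v _; exact: vertex_sum.
  rewrite -sum_nat_const [X in _ <= X]big_mkcond /=; apply: eq_leq; apply: eq_bigr => v _.
  by rewrite !inE; case: ifP.
have S4 := cardsC H.
move: S1 S3 S4; rewrite S2; move: (\sum_v _) (#|E|) (#|H|) (#|~: H|) (#|V|) => s e h hc n.
lia.
Qed.
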